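(* Let $A\in\mathcal{S}_n$. Then $A\in\operatorname{int}(\mathcal{C}_n)$ if and only if $\operatorname{rank}(A)=n$ and there exist $b_1\in\mathbb{R}^n_{++}$ and $\lambda>0$ such that $A-\lambda b_1b_1^T\in\mathcal{C}_n$.
   Context: $\mathcal{S}_n$: real symmetric $n\times n$ matrices. $\mathcal{C}_n=\{BB^T: B\in\mathbb{R}^{n\times m}\text{ entrywise nonnegative},\ m\ge1\}$ is the completely positive cone, with interior taken in $\mathcal{S}_n$. $\mathbb{R}^n_{++}=\{x\in\mathbb{R}^n: x>0\text{ entrywise}\}$. *)

(* Defs.v *)
(* Scalars: an arbitrary real closed field R (includes the reals). *)
From HB Require Import structures.
From mathcomp Require Import all_boot all_order all_algebra.
Set Implicit Arguments. Unset Strict Implicit. Unset Printing Implicit Defensive.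
Import Order.TTheory GRing.Theory Num.Theory.
Local Open Scope ring_scope.

Definition symmetric_mx (R : rcfType) (n : nat) (A : 'M[R]_n) : Prop := A^T = A.

Definition nonneg_mx (R : rcfType) (n m : nat) (B : 'M[R]_(n, m)) : Prop :=
  forall i j, 0 <= B i j.

Definition completely_positive (R : rcfType) (n : nat) (A : 'M[R]_n) : Prop :=
  exists (m : nat) (B : 'M[R]_(n, m)), (0 < m)%N /\ nonneg_mx B /\ A = B *m B^T.

(* interior of C_n taken in S_n (topology of S_n given by the entrywise max norm,
   equivalent to any norm in finite dimension): A in S_n and some open
   ball in S_n around A is contained in C_n *)
Definition int_completely_positive (R : rcfType) (n : nat) (A : 'M[R]_n) : Prop :=
  symmetric_mx A /\
  exists eps : R, 0 < eps /\
    forall X : 'M[R]_n, symmetric_mx X ->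
      (forall i j, `|X i j - A i j| < eps) -> completely_positive X.

(* Main.v *)
Require Import Defs.
From HB Require Import structures.
From mathcomp Require Import all_boot all_order all_algebra.
From mathcomp Require Import ring lra.
Import Order.TTheory GRing.Theory Num.Theory.
Local Open Scope ring_scope.

Set Implicit Arguments. Unset Strict Implicit. Unset Printing Implicit Defensive.


Lemma cp0 (R : rcfType) n : completely_positive (0 : 'M[R]_n).
Proof.
exists 1%N, 0; split=> //; split; first by move=> i j; rewrite mxE.
by rewrite mul0mx.
Qed.

Lemma cp_BBt (R : rcfType) n m (B : 'M[R]_(n, m)) :
  nonneg_mx B -> completely_positive (B *m B^T).
Proof.
case: m B => [|m] B hB.
  by rewrite thinmx0 mul0mx; apply: cp0.
by exists m.+1, B.
Qed.

Lemma cp_add (R : rcfType) n (X Y : 'M[R]_n) :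
  completely_positive X -> completely_positive Y -> completely_positive (X + Y).
Proof.
move=> [m1 [B1 [h1 [n1 ->]]]] [m2 [B2 [h2 [n2 ->]]]].
exists (m1 + m2)%N, (row_mx B1 B2); split; first by rewrite addn_gt0 h1.
split; last by rewrite tr_row_mx mul_row_col.
move=> i j; rewrite -[j]splitK; case: split => k /=; by rewrite ?row_mxEl ?row_mxEr.
Qed.

Lemma cp_scale (R : rcfType) n (c : R) (X : 'M[R]_n) :
  0 <= c -> completely_positive X -> completely_positive (c *: X).
Proof.
move=> c0 [m [B [hm [hB ->]]]].
exists m, (Num.sqrt c *: B); split => //; split.
  by move=> i j; rewrite mxE mulr_ge0 ?sqrtr_ge0.
by rewrite linearZ /= -scalemxAr -scalemxAl scalerA -expr2 sqr_sqrtr.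
Qed.

Lemma cp_sum (R : rcfType) n (I : finType) (F : I -> 'M[R]_n) :
  (forall i, completely_positive (F i)) -> completely_positive (\sum_i F i).
Proof.
move=> h; apply: (big_ind (fun X => completely_positive X)) => //.
  exact: cp0.
exact: cp_add.
Qed.

Lemma cp_psd (R : rcfType) n (X : 'M[R]_n) (v : 'rV[R]_n) :
  completely_positive X -> 0 <= (v *m X *m v^T) 0 0.
Proof.
move=> [m [B [_ [_ ->]]]].
have -> : v *m (B *m B^T) *m v^T = (v *m B) *m (v *m B)^T.
  by rewrite trmx_mul !mulmxA.
rewrite mxE; apply: sumr_ge0 => i _; rewrite !mxE; by rewrite -expr2 sqr_ge0.
Qed.



Lemma mul_bound (R : rcfType) p q r (X : 'M[R]_(p, q)) (Y : 'M[R]_(q, r)) x y :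
  (forall i j, `|X i j| <= x) -> (forall i j, `|Y i j| <= y) ->
  forall i j, `|(X *m Y) i j| <= q%:R * (x * y).
Proof.
move=> hX hY i j; rewrite mxE.
apply: le_trans (ler_norm_sum _ _ _) _.
have -> : q%:R * (x * y) = \sum_(t < q) (x * y).
  by rewrite sumr_const card_ord mulr_natl.
apply: ler_sum => t _; rewrite normrM; apply: ler_pM => //; exact: normr_ge0.
Qed.

Definition mxnrm (R : rcfType) p q (M : 'M[R]_(p, q)) : R :=
  1 + \sum_i \sum_j `|M i j|.

Lemma mxnrm_gt0 (R : rcfType) p q (M : 'M[R]_(p, q)) : 0 < mxnrm M.
Proof.
rewrite /mxnrm; apply: (lt_le_trans ltr01); rewrite lerDl.
by apply: sumr_ge0 => i _; apply: sumr_ge0 => j _.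
Qed.

Lemma mxnrm_ge (R : rcfType) p q (M : 'M[R]_(p, q)) i j : `|M i j| <= mxnrm M.
Proof.
rewrite /mxnrm (bigD1 i) //= (bigD1 j) //=.
have h1 : 0 <= \sum_(t < q | t != j) `|M i t| by apply: sumr_ge0.
have h2 : 0 <= \sum_(t < p | t != i) \sum_j `|M t j|.
  by apply: sumr_ge0 => t _; apply: sumr_ge0.
lra.
Qed.



Lemma delta_split (R : rcfType) k (j : 'I_k) :
  delta_mx j j = delta_mx j (0 : 'I_1) *m delta_mx 0 j :> 'M[R]_k.
Proof. by rewrite mul_delta_mx. Qed.

Lemma delta_mid (R : rcfType) k (M : 'M[R]_k) (j : 'I_k) :
  delta_mx 0 j *m M *m delta_mx j 0 = (M j j)%:M :> 'M[R]_1.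
Proof.
apply/matrixP=> x y; rewrite !ord1 -rowE -colE !mxE eqxx /=.
by rewrite mulr1n.
Qed.

Lemma DMD (R : rcfType) k (M : 'M[R]_k) (j : 'I_k) :
  delta_mx j j *m M *m delta_mx j j = M j j *: delta_mx j j.
Proof.
rewrite !delta_split !mulmxA -(mulmxA _ (delta_mx 0 j) M).
rewrite -(mulmxA _ (delta_mx 0 j *m M)) -(mulmxA (delta_mx j 0)).
by rewrite delta_mid mul_scalar_mx -scalemxAr.
Qed.

Lemma sum_delta_scale (R : rcfType) k (x : 'I_k -> R) :
  \sum_j x j *: delta_mx j j = diag_mx (\row_j x j) :> 'M[R]_k.
Proof.
by rewrite diag_mx_sum_delta; apply: eq_bigr => j _; rewrite mxE.
Qed.

Lemma UUt (R : rcfType) k (F : 'M[R]_k) (a c : R) (j : 'I_k) : F^T = F ->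
  (a%:M + c *: (delta_mx j j *m F)) *m (a%:M + c *: (delta_mx j j *m F))^T =
  (a ^+ 2)%:M + (a * c) *: (delta_mx j j *m F) + (a * c) *: (F *m delta_mx j j)
  + (c ^+ 2 * (F *m F) j j) *: delta_mx j j.
Proof.
move=> hF.
rewrite linearD /= linearZ /= tr_scalar_mx trmx_mul trmx_delta hF.
rewrite mulmxDl !mulmxDr !mul_scalar_mx !mul_mx_scalar.
rewrite -!scalemxAl -!scalemxAr ?scalerA.
have -> : delta_mx j j *m F *m (F *m delta_mx j j) = (F *m F) j j *: delta_mx j j.
  by rewrite mulmxA -(mulmxA _ F F) DMD.
have -> : a *: a%:M = (a ^+ 2)%:M :> 'M[R]_k.
  by apply/matrixP=> r t; rewrite !mxE mulrnAr expr2.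
rewrite scalerA -expr2 !addrA.
congr (_ + _); rewrite -!addrA; congr (_ + _); by rewrite addrC.
Qed.

Lemma PDF_entry (R : rcfType) n k (P : 'M[R]_(n, k)) (F : 'M[R]_k) j l i :
  (P *m (delta_mx j j *m F)) l i = P l j * F j i.
Proof.
rewrite delta_split !mulmxA -colE -mulmxA -rowE.
by rewrite mxE big_ord1 !mxE.
Qed.

Lemma core (R : rcfType) n k (P : 'M[R]_(n, k)) (g a c d U : R) (F : 'M[R]_k) :
  0 <= c -> 2 * a * c = 1 -> 0 <= U ->
  (forall l i, 0 <= P l i) -> (forall l i, P l i <= U) ->
  (forall l i, c * (U * d) <= a * P l i) ->
  k%:R * a ^+ 2 + c ^+ 2 * (k%:R * (d * d)) <= g ->
  F^T = F -> (forall i j, `|F i j| <= d) ->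
  completely_positive (P *m (g%:M + F) *m P^T).
Proof.
move=> c0 hac U0 P0 PU hPa hg hF Fd.
pose U' j := a%:M + c *: (delta_mx j j *m F).
pose dv j := g - k%:R * a ^+ 2 - c ^+ 2 * (F *m F) j j.
have hsum : g%:M + F = \sum_j U' j *m (U' j)^T + \sum_j dv j *: delta_mx j j.
  rewrite /U'; under eq_bigr => j _ do rewrite UUt //.
  rewrite !big_split /= -!scaler_sumr -mulmx_suml -mulmx_sumr -mx1_sum_delta.
  rewrite mul1mx mulmx1 !sum_delta_scale.
  apply/matrixP => r t; rewrite !mxE summxE sumr_const card_ord !mxE.
  have hF2 : a * c * F r t + a * c * F r t = F r t.
    by rewrite -mulrDl -mulr2n -mulr_natl mulrA hac mul1r.
  rewrite /dv mxE; case: eqP => _; rewrite ?mulr1n ?mulr0n ?addr0 ?mul0rn ?add0r -?[a ^+ 2 *+ k]mulr_natl; lra.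
rewrite hsum mulmxDr mulmxDl; apply: cp_add.
  rewrite mulmx_sumr mulmx_suml; apply: cp_sum => j.
  have -> : P *m (U' j *m (U' j)^T) *m P^T = (P *m U' j) *m (P *m U' j)^T.
    by rewrite trmx_mul !mulmxA.
  apply: cp_BBt => l i.
  have e : forall (M N : 'M[R]_(n, k)), (a *: M + c *: N) l i = a * M l i + c * N l i.
    by move=> M N; rewrite !mxE.
  rewrite /U' mulmxDr mul_mx_scalar -scalemxAr e PDF_entry.
  have h1 : `|P l j * F j i| <= U * d.
    rewrite normrM ger0_norm //; apply: ler_pM => //; exact: normr_ge0.
  have h2 : - (U * d) <= P l j * F j i.
    by move: h1; rewrite ler_norml => /andP [].
  have h3 : c * (- (U * d)) <= c * (P l j * F j i) by apply: ler_wpM2l.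
  have := hPa l i; lra.
rewrite mulmx_sumr mulmx_suml; apply: cp_sum => j.
rewrite -scalemxAr -scalemxAl; apply: cp_scale.
  have h1 := mul_bound Fd Fd j j.
  have h2 : (F *m F) j j <= k%:R * (d * d) by move: h1; rewrite ler_norml => /andP [].
  have h3 : c ^+ 2 * (F *m F) j j <= c ^+ 2 * (k%:R * (d * d)).
    by apply: ler_wpM2l => //; exact: sqr_ge0.
  rewrite /dv; lra.
have -> : P *m delta_mx j j *m P^T = (P *m delta_mx j (0 : 'I_1)) *m (P *m delta_mx j (0 : 'I_1))^T.
  by rewrite trmx_mul trmx_delta !mulmxA -(mulmxA P (delta_mx j 0)) mul_delta_mx.
apply: cp_BBt => l i; rewrite -colE mxE; exact: P0.
Qed.



Lemma vvt_pos (R : rcfType) n (v : 'rV[R]_n) : v != 0 -> 0 < (v *m v^T) 0 0.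
Proof.
move=> v0.
case: (pickP (fun i => v 0 i != 0)) => [i hi | h]; last first.
  by case/eqP: v0; apply/rowP => i; move/negbFE: (h i) => /eqP ->; rewrite mxE.
rewrite mxE (bigD1 i) //= mxE.
have h1 : 0 < v 0 i * v 0 i by rewrite -expr2 exprn_even_gt0 // hi orbT.
have h2 : 0 <= \sum_(j < n | j != i) v 0 j * v^T j 0.
  by apply: sumr_ge0 => j _; rewrite mxE -expr2 sqr_ge0.
lra.
Qed.

Lemma forward (R : rcfType) (n : nat) (A : 'M[R]_n) (hA : symmetric_mx A) :
  int_completely_positive A ->
  (\rank A = n /\
   exists (b1 : 'cV[R]_n) (lam : R),
     (forall i, 0 < b1 i 0) /\ 0 < lam /\
     completely_positive (A - lam *: (b1 *m b1^T))).
Proof.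
move=> [_ [eps [he hX]]].
split.
  case: (boolP (\det A == 0)) => [/det0P [v v0 hv] | hd]; last first.
    have : row_free A by rewrite row_free_unit unitmxE unitfE.
    by move/eqP.
  exfalso.
  pose x := v^T.
  pose s := mxnrm (x *m x^T).
  have s0 : 0 < s := mxnrm_gt0 _.
  pose del := eps / (2 * s).
  have del0 : 0 < del by rewrite /del divr_gt0 // mulr_gt0.
  have hds : del * s = eps / 2.
    by rewrite /del; field; rewrite gt_eqF.
  have hcp : completely_positive (A - del *: (x *m x^T)).
    apply: hX.
      by rewrite /symmetric_mx linearB /= linearZ /= trmx_mul trmxK hA.
    move=> i j.
    have -> : (A - del *: (x *m x^T)) i j - A i j = - (del * (x *m x^T) i j).
      by rewrite !mxE; ring.
    rewrite normrN normrM.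
    rewrite gtr0_norm //.
    have := mxnrm_ge (x *m x^T) i j; rewrite -/s => h.
    have : del * `|(x *m x^T) i j| <= del * s by apply: ler_wpM2l => //; exact: ltW.
    lra.
  have := cp_psd v hcp.
  rewrite mulmxBr mulmxBl hv mul0mx add0r -scalemxAr -scalemxAl.
  have -> : v *m (x *m x^T) *m v^T = (v *m v^T) *m (v *m v^T).
    by rewrite /x trmxK !mulmxA.
  have q0 := vvt_pos v0.
  move: q0; set q := v *m v^T => q0.
  rewrite !mxE big_ord1.
  have : 0 < del * (q 0 0 * q 0 0) by rewrite mulr_gt0 // mulr_gt0.
  lra.
exists (const_mx 1), (eps / 2); split; first by move=> i; rewrite mxE ltr01.
split; first by rewrite divr_gt0.
apply: hX.
  by rewrite /symmetric_mx linearB /= linearZ /= trmx_mul trmxK hA.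
move=> i j.
have -> : (A - (eps / 2) *: ((const_mx 1 : 'cV[R]_n) *m (const_mx 1 : 'cV[R]_n)^T)) i j - A i j = - (eps / 2).
  rewrite !mxE big_ord1 ?mxE; ring.
rewrite normrN gtr0_norm ?divr_gt0 //; lra.
Qed.



Lemma lower_bound (R : rcfType) n (f : 'I_n -> R) :
  (forall i, 0 < f i) -> exists r, [/\ 0 < r, r <= 1 & forall i, r <= f i].
Proof.
move=> hf.
pose S := \sum_i (f i)^-1.
have S0 : 0 <= S by apply: sumr_ge0 => i _; rewrite invr_ge0 ltW.
have S1 : 0 < 1 + S by lra.
exists (1 + S)^-1; split; first by rewrite invr_gt0.
  by rewrite invf_le1 //; lra.
move=> i.
rewrite -[f i]invrK lef_pV2 ?posrE ?invr_gt0 //.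
rewrite /S (bigD1 i) //=.
have : 0 <= \sum_(j < n | j != i) (f j)^-1.
  by apply: sumr_ge0 => j _; rewrite invr_ge0 ltW.
lra.
Qed.

Lemma PPt (R : rcfType) n m (B C : 'M[R]_(n, m)) (s : R) :
  row_mx (B + s *: C) (B - s *: C) *m (row_mx (B + s *: C) (B - s *: C))^T =
  2 *: (B *m B^T) + (2 * s ^+ 2) *: (C *m C^T).
Proof.
rewrite tr_row_mx mul_row_col.
apply/matrixP => l l'; rewrite !mxE !mulr_sumr -!big_split /=.
by apply: eq_bigr => t _; rewrite !mxE; ring.
Qed.

Lemma PQ1 (R : rcfType) n m (B C : 'M[R]_(n, m)) (s : R) :
  row_mx (B + s *: C) (B - s *: C) *m col_mx (2^-1)%:M (2^-1)%:M = B.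
Proof.
rewrite mul_row_col !mul_mx_scalar.
by apply/matrixP => l i; rewrite !mxE; field.
Qed.

Lemma PQ2 (R : rcfType) n m (B C : 'M[R]_(n, m)) (s : R) : s != 0 ->
  row_mx (B + s *: C) (B - s *: C) *m col_mx ((2 * s)^-1)%:M (- (2 * s)^-1)%:M = C.
Proof.
move=> s0; rewrite mul_row_col !mul_mx_scalar.
by apply/matrixP => l i; rewrite !mxE; field.
Qed.

Lemma sym_conj (R : rcfType) p q (Y : 'M[R]_(p, q)) (E : 'M[R]_q) :
  E^T = E -> (Y *m E *m Y^T)^T = Y *m E *m Y^T.
Proof. by move=> h; rewrite !trmx_mul trmxK h mulmxA. Qed.

Lemma conj_assoc (R : rcfType) p q r (P : 'M[R]_(p, q)) (L : 'M[R]_(q, r)) (E : 'M[R]_r) :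
  P *m (L *m E *m L^T) *m P^T = (P *m L) *m E *m (P *m L)^T.
Proof. by rewrite trmx_mul !mulmxA. Qed.

Lemma backward (R : rcfType) (n : nat) (A : 'M[R]_n) (hA : symmetric_mx A) :
  (\rank A = n /\
   exists (b1 : 'cV[R]_n) (lam : R),
     (forall i, 0 < b1 i 0) /\ 0 < lam /\
     completely_positive (A - lam *: (b1 *m b1^T))) ->
  int_completely_positive A.
Proof.
move=> [rk [b [lam [hb [hl [m [C [hm [hC hAC]]]]]]]]].
split => //.
have Au : A \in unitmx by rewrite -row_free_unit /row_free rk eqxx.
have [rho [rho0 rho1 hrho]] := @lower_bound R n (fun i => b i 0) hb.
pose cm := mxnrm C.
have cm1 : 1 <= cm.
  rewrite /cm /mxnrm lerDl; by apply: sumr_ge0 => i _; apply: sumr_ge0.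
pose s := rho / (2 * cm).
have s0 : 0 < s by rewrite /s divr_gt0 // mulr_gt0 //; lra.
have hs : s * (2 * cm) = rho by rewrite /s; field; apply/eqP; lra.
have hsC : forall l i, s * C l i <= rho / 2.
  move=> l i; have h1 : C l i <= cm by apply: le_trans (ler_norm _) (mxnrm_ge _ _ _).
  have : s * C l i <= s * cm by apply: ler_wpM2l => //; exact: ltW.
  lra.
have sC0 : forall l i, 0 <= s * C l i by move=> l i; rewrite mulr_ge0 ?hC // ltW.
have s12 : s <= 2^-1.
  have : s * 1 <= s * cm by apply: ler_wpM2l => //; exact: ltW.
  lra.
pose B1 : 'M[R]_(n, m) := \matrix_(l, i) b l 0.
pose P := row_mx (B1 + s *: C) (B1 - s *: C).
have Ppos : forall l i, rho / 2 <= P l i.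
  move=> l i; rewrite /P -[i]splitK; case: split => t /=.
    rewrite row_mxEl !mxE; have := hrho l; have := sC0 l t; simpl; lra.
  rewrite row_mxEr !mxE; have := hrho l; have := hsC l t; simpl; lra.
pose k := (m + m)%N.
pose mu := lam / m%:R.
have m0 : 0 < m%:R :> R by rewrite ltr0n.
have mu0 : 0 < mu by rewrite /mu divr_gt0.
have hmu : mu * m%:R = lam by rewrite /mu; field; rewrite gt_eqF.
have hB1 : B1 *m B1^T = m%:R *: (b *m b^T).
  apply/matrixP => l l'; rewrite !mxE big_ord1 !mxE.
  under eq_bigr do rewrite !mxE.
  by rewrite sumr_const card_ord mulr_natl.
have hA2 : A = mu *: (B1 *m B1^T) + C *m C^T.
  by rewrite -hAC hB1 scalerA hmu addrC subrK.
pose gam := mu / (2 * (1 + mu)).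
have gam0 : 0 < gam by rewrite /gam divr_gt0 // mulr_gt0 //; lra.
have hgam : gam * (2 * (1 + mu)) = mu by rewrite /gam; field; apply/eqP; lra.
have gam12 : gam <= 2^-1.
  have hp : 0 < 2 * (1 + mu) :> R by lra.
  rewrite -(ler_pM2r hp) hgam.
  have -> : 2^-1 * (2 * (1 + mu)) = 1 + mu :> R by field.
  lra.
pose Rm := (mu - 2 * gam) *: (B1 *m B1^T) + (1 - 2 * gam * s ^+ 2) *: (C *m C^T).
have cpRm : completely_positive Rm.
  apply: cp_add; apply: cp_scale.
  - have : 0 <= gam * mu by rewrite mulr_ge0 // ltW.
    lra.
  - by apply: cp_BBt => l i; rewrite mxE ltW.
  - have h1 : s * s <= 2^-1 * 2^-1 by apply: ler_pM => //; exact: ltW.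
    have h2 : gam * (s * s) <= 2^-1 * (2^-1 * 2^-1).
      by apply: ler_pM => //; [exact: ltW | rewrite mulr_ge0 // ltW].
    rewrite expr2; lra.
  - exact: cp_BBt.
have hAP : A = gam *: (P *m P^T) + Rm.
  rewrite hA2 /Rm (PPt B1 C s) scalerDr !scalerA addrACA -!scalerDl.
  have -> : gam * (2 * s ^+ 2) + (1 - 2 * gam * s ^+ 2) = 1 by ring.
  by rewrite scale1r; congr (_ *: _ + _); ring.
pose Q1 : 'M[R]_(m + m, m) := col_mx (2^-1)%:M (2^-1)%:M.
pose Q2 : 'M[R]_(m + m, m) := col_mx ((2 * s)^-1)%:M (- (2 * s)^-1)%:M.
have hQ1 : P *m Q1 = B1 := PQ1 B1 C s.
have hQ2 : P *m Q2 = C := PQ2 B1 C (lt0r_neq0 s0).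
pose K := mu *: (Q1 *m Q1^T) + Q2 *m Q2^T.
pose M := K *m P^T.
have hAM : A = P *m M.
  have -> : P *m M = mu *: ((P *m Q1) *m (P *m Q1)^T) + (P *m Q2) *m (P *m Q2)^T.
    by rewrite /M /K !trmx_mul mulmxA mulmxDr mulmxDl -scalemxAr -scalemxAl !mulmxA.
  by rewrite hQ1 hQ2.
pose L := M *m invmx A.
have hPL : P *m L = 1%:M by rewrite /L mulmxA -hAM mulmxV.
pose U := mxnrm P.
have U1 : 1 <= U by rewrite /U /mxnrm lerDl; apply: sumr_ge0 => i _; apply: sumr_ge0.
pose kk : R := k%:R.
have kk0 : 0 <= kk by rewrite /kk ler0n.
pose a := gam / (2 * (kk + 1)).
have a0 : 0 < a by rewrite /a divr_gt0 // mulr_gt0 //; lra.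
have ha : a * (2 * (kk + 1)) = gam by rewrite /a; field; apply/eqP; lra.
pose c := (2 * a)^-1.
have c0 : 0 < c by rewrite /c invr_gt0 mulr_gt0.
have hac : 2 * a * c = 1 by rewrite /c mulfV // gt_eqF // mulr_gt0.
pose e := a * (rho / (2 * U)).
have hr : rho / (2 * U) <= 1 by rewrite ler_pdivrMr ?mulr_gt0 //; lra.
have hr0 : 0 < rho / (2 * U) by rewrite divr_gt0 // mulr_gt0 //; lra.
have e0 : 0 < e by rewrite mulr_gt0.
have ea : e <= a by rewrite /e -{2}[a]mulr1 ler_wpM2l // ltW.
pose d := 2 * a * e.
have d0 : 0 < d by rewrite /d mulr_gt0 // mulr_gt0.
pose ell := mxnrm L.
have ell0 : 0 < ell := mxnrm_gt0 L.
pose Z := n%:R * n%:R * ell * ell.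
have Z0 : 0 <= Z by rewrite /Z !mulr_ge0 // ?ler0n // ltW.
pose eps := d / (1 + Z).
have eps0 : 0 < eps by rewrite /eps divr_gt0 //; lra.
have heps : eps * (1 + Z) = d by rewrite /eps; field; apply/eqP; lra.
exists eps; split => // X hX hXA.
pose E := X - A.
pose F := L *m E *m L^T.
have hE : E^T = E by rewrite /E linearB /= hX hA.
have hF : F^T = F by apply: sym_conj.
have Fd : forall i j, `|F i j| <= d.
  have h1 : forall i j, `|L i j| <= ell by move=> i j; exact: mxnrm_ge.
  have h2 : forall i j, `|E i j| <= eps.
    by move=> i j; apply: ltW; have := hXA i j; rewrite /E !mxE.
  have h3 := mul_bound h1 h2.
  have h4 : forall i j, `|L^T i j| <= ell by move=> i j; rewrite mxE; exact: mxnrm_ge.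
  have h5 := mul_bound h3 h4.
  move=> i j; apply: le_trans (h5 i j) _.
  have : 0 <= Z * eps by rewrite mulr_ge0 // ltW.
  rewrite /Z in heps *; lra.
have hX2 : X = P *m (gam%:M + F) *m P^T + Rm.
  rewrite mulmxDr mul_mx_scalar mulmxDl -scalemxAl.
  have -> : P *m F *m P^T = E.
    have -> : P *m F *m P^T = (P *m L) *m E *m (P *m L)^T by apply: conj_assoc.
    by rewrite hPL mul1mx trmx1 mulmx1.
  by rewrite addrAC -hAP /E addrC subrK.
rewrite hX2; apply: cp_add => //.
apply: (@core R n k P gam a c d U F) => //.
- exact: ltW.
- exact: (le_trans ler01 U1).
- move=> l i; have := Ppos l i; have : 0 < rho / 2 by lra.
  move=> h1 h2; lra.
- move=> l i; apply: le_trans (ler_norm _) (mxnrm_ge _ _ _).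
- move=> l i.
  have -> : c * (U * d) = a * (rho / 2).
    rewrite /c /d /e; field; apply/andP; split; apply/eqP; lra.
  apply: ler_wpM2l; [exact: ltW | exact: Ppos].
- have -> : c ^+ 2 * (kk * (d * d)) = kk * (e * e).
    rewrite /c /d; field; apply/eqP; lra.
  have h1 : e * e <= a * a by apply: ler_pM => //; exact: ltW.
  have h2 : kk * (e * e) <= kk * (a * a) by apply: ler_wpM2l.
  have h3 : kk * a <= gam / 2 by lra.
  have h4 : a <= 1 .
    have : 0 <= kk * a by rewrite mulr_ge0 // ltW.
    lra.
  have h5 : kk * a * a <= gam / 2 * 1.
    by apply: ler_pM => //; [rewrite mulr_ge0 // ltW | exact: ltW].
  rewrite expr2; lra.
Qed.


Unset Implicit Arguments.

Theorem lemma6p1 (R : rcfType) (n : nat) (A : 'M[R]_n) (hA : symmetric_mx A) :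
  int_completely_positive A <->
  (\rank A = n /\
   exists (b1 : 'cV[R]_n) (lam : R),
     (forall i, 0 < b1 i 0) /\ 0 < lam /\
     completely_positive (A - lam *: (b1 *m b1^T))).
Proof.
split; [exact: forward | exact: backward].
Qed.
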